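(* For every prime power $q$, all integers $n$, $r \le \lfloor n/2 \rfloor$ and $0 \le t \le r$, $$q^{t(n-t)} \le V_{\mathrm{C}}(t) < K_q^{-2}\, q^{t(n-t)}.$$
   Context: For integers $0\le k\le m$, ${m \brack k} = \prod_{i=0}^{k-1}\frac{q^m - q^i}{q^k - q^i}$ is the Gaussian binomial coefficient. $K_q = \prod_{j=1}^\infty (1 - q^{-j})$. For $0 \le d \le r$, $N_{\mathrm{C}}(d) = q^{d^2}{r \brack d}{n-r \brack d}$ (the number of $r$-dimensional subspaces of $\mathrm{GF}(q)^n$ at injection distance $d$ from a given one, where $d_{\mathrm{I}}(U,V) = \dim(U+V) - \min\{\dim U,\dim V\}$), and $V_{\mathrm{C}}(t) = \sum_{d=0}^t N_{\mathrm{C}}(d)$. *)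

(* Defs.v *)
From HB Require Import structures.
From mathcomp Require Import all_boot all_order all_algebra.
From mathcomp Require Import all_classical all_reals all_analysis.
Set Implicit Arguments. Unset Strict Implicit. Unset Printing Implicit Defensive.
Import Order.TTheory GRing.Theory Num.Theory.
Local Open Scope ring_scope.

Definition prime_power (q : nat) : Prop :=
  exists p k : nat, prime p /\ (0 < k)%N /\ q = (p ^ k)%N.

Definition gauss_binom (R : realType) (q m k : nat) : R :=
  \prod_(i < k) (((q%:R : R) ^+ m - (q%:R) ^+ i) / ((q%:R) ^+ k - (q%:R) ^+ i)).

Definition Kq (R : realType) (q : nat) : R :=
  limn (fun m : nat => \prod_(1 <= j < m.+1) (1 - ((q%:R : R) ^+ j)^-1)).

Definition N_C (R : realType) (q n r d : nat) : R :=
  (q%:R : R) ^+ (d * d) * gauss_binom R q r d * gauss_binom R q (n - r) d.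

Definition V_C (R : realType) (q n r t : nat) : R :=
  \sum_(0 <= d < t.+1) N_C R q n r d.

(* Main.v *)
Require Import Defs.
From HB Require Import structures.
From mathcomp Require Import all_boot all_order all_algebra.
From mathcomp Require Import all_classical all_reals all_analysis.
From mathcomp Require Import ring lra zify.
Import Order.TTheory GRing.Theory Num.Theory.
Local Open Scope ring_scope.

Definition Fq (R : realType) (q m : nat) : R :=
  \prod_(i < m) ((q%:R : R) ^+ i.+1 - 1).
Definition Pq (R : realType) (q m : nat) : R :=
  \prod_(i < m) (1 - ((q%:R : R) ^+ i.+1)^-1).
Definition eqq (m : nat) : nat := \sum_(i < m) i.+1.

Lemma Qgt1 (R : realType) (q : nat) : (1 < q)%N -> 1 < (q%:R : R).
Proof. by move=> h; rewrite ltr1n. Qed.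

Lemma Qe_gt1 (R : realType) (q k : nat) : (1 < q)%N -> 1 < (q%:R : R) ^+ k.+1.
Proof. by move=> h; rewrite exprn_egt1 // Qgt1. Qed.

Lemma Qe_gt0 (R : realType) (q k : nat) : (1 < q)%N -> 0 < (q%:R : R) ^+ k.
Proof. move=> h; apply: exprn_gt0; rewrite ltr0n; lia. Qed.

Lemma Fq_gt0 (R : realType) (q m : nat) : (1 < q)%N -> 0 < Fq R q m.
Proof.
move=> h; apply: prodr_gt0 => i _; rewrite subr_gt0; exact: Qe_gt1.
Qed.

Lemma Pq_gt0 (R : realType) (q m : nat) : (1 < q)%N -> 0 < Pq R q m.
Proof.
move=> h; apply: prodr_gt0 => i _; rewrite subr_gt0 invf_lt1 ?Qe_gt1 //.
exact: Qe_gt0.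
Qed.

Lemma FqS (R : realType) (q m : nat) : Fq R q m.+1 = Fq R q m * ((q%:R : R) ^+ m.+1 - 1).
Proof. by rewrite /Fq big_ord_recr. Qed.

Lemma PqS (R : realType) (q m : nat) : Pq R q m.+1 = Pq R q m * (1 - ((q%:R : R) ^+ m.+1)^-1).
Proof. by rewrite /Pq big_ord_recr. Qed.

Lemma Fq_P (R : realType) (q m : nat) : (1 < q)%N ->
  Fq R q m = (q%:R : R) ^+ (eqq m) * Pq R q m.
Proof.
move=> h; rewrite /Fq /Pq /eqq -prodrXr -big_split /=; apply: eq_bigr => i _.
rewrite mulrBr mulr1 mulfV //; apply: lt0r_neq0; exact: Qe_gt0.
Qed.

Lemma eqqS (m : nat) : eqq m.+1 = (eqq m + m.+1)%N.
Proof. by rewrite /eqq big_ord_recr. Qed.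

Lemma eqq_add (a b : nat) : eqq (a + b) = (eqq a + eqq b + a * b)%N.
Proof.
elim: b => [|b IH]; first by rewrite addn0 muln0 addn0 [eqq 0]/eqq big_ord0 addn0.
rewrite addnS !eqqS IH; lia.
Qed.

Lemma Pq_le (R : realType) (q a b : nat) : (1 < q)%N -> Pq R q (a + b) <= Pq R q a.
Proof.
move=> h; elim: b => [|b IH]; first by rewrite addn0.
rewrite addnS PqS; apply: le_trans IH; rewrite ler_piMr ?(ltW (Pq_gt0 _ _ _ h)) //.
Qed.

Lemma Tprod (R : realType) (q m k : nat) : (k <= m)%N ->
  (\prod_(i < k) ((q%:R : R) ^+ (m - i) - 1)) * Fq R q (m - k) = Fq R q m.
Proof.
elim: k => [|k IH] hk; first by rewrite big_ord0 mul1r subn0.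
have e : (m - k = (m - k.+1).+1)%N by lia.
rewrite big_ord_recr /= -mulrA [X in _ * X]mulrC {1}e -FqS -e; exact: IH (ltnW hk).
Qed.

Lemma Qsplit (R : realType) (q m i : nat) : (i <= m)%N ->
  (q%:R : R) ^+ m - (q%:R) ^+ i = (q%:R) ^+ i * ((q%:R) ^+ (m - i) - 1).
Proof. by move=> h; rewrite mulrBr mulr1 -exprD subnKC. Qed.

Lemma Gc (R : realType) (q m k : nat) : (1 < q)%N -> (k <= m)%N ->
  gauss_binom R q m k = Fq R q m / (Fq R q k * Fq R q (m - k)).
Proof.
move=> hq hk; rewrite /gauss_binom prodf_div.
rewrite (eq_bigr (fun i : 'I_k => (q%:R : R) ^+ i * ((q%:R) ^+ (m - i) - 1))); last first.
  move=> i _; apply: Qsplit; apply: leq_trans hk; exact: ltnW.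
rewrite [X in _ / X](eq_bigr (fun i : 'I_k => (q%:R : R) ^+ i * ((q%:R) ^+ (k - i) - 1))); last first.
  move=> i _; apply: Qsplit; exact: ltnW.
rewrite !big_split /=.
have h1 := @Tprod R q m k hk.
have h2 := @Tprod R q k k (leqnn k).
rewrite subnn /Fq big_ord0 mulr1 -/(Fq R q k) in h2.
have hF := @Fq_gt0 R q (m - k) hq.
have hP : 0 < \prod_(i < k) (q%:R : R) ^+ i by apply: prodr_gt0 => i _; exact: Qe_gt0.
rewrite h2 -h1; field.
apply/and3P; split; apply: lt0r_neq0 => //; exact: Fq_gt0.
Qed.

Lemma Gz (R : realType) (q m k : nat) : (m < k)%N -> gauss_binom R q m k = 0.
Proof.
move=> h; rewrite /gauss_binom (bigD1 (Ordinal h)) //= subrr mul0r mul0r //.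
Qed.

Lemma G0 (R : realType) (q m : nat) : gauss_binom R q m 0 = 1.
Proof. by rewrite /gauss_binom big_ord0. Qed.

Lemma GP (R : realType) (q m k : nat) : (1 < q)%N ->
  gauss_binom R q m.+1 k.+1 =
  gauss_binom R q m k + (q%:R : R) ^+ k.+1 * gauss_binom R q m k.+1.
Proof.
move=> hq.
case: (ltngtP k m) => h.
- rewrite !Gc //; try lia.
  have e1 : (m.+1 - k.+1 = m - k)%N by lia.
  have e2 : (m - k = (m - k.+1).+1)%N by lia.
  rewrite e1 e2 !FqS.
  have e3 : (q%:R : R) ^+ m.+1 = (q%:R) ^+ k.+1 * (q%:R) ^+ (m - k.+1).+1.
    by rewrite -exprD; congr (_ ^+ _); lia.
  rewrite e3.
  have := @Fq_gt0 R q m hq; have := @Fq_gt0 R q k hq;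
    have := @Fq_gt0 R q (m - k.+1) hq.
  have := @Qe_gt1 R q k hq; have := @Qe_gt1 R q (m - k.+1) hq.
  set a := (q%:R : R) ^+ k.+1; set b := (q%:R : R) ^+ (m - k.+1).+1.
  move=> hb ha h1 h2 h3.
  field.
  apply/and4P; split; apply: lt0r_neq0; rewrite ?subr_gt0 //.
- rewrite !Gz //; try lia; by rewrite mulr0 addr0.
- rewrite h (@Gz R q m m.+1) // mulr0 addr0 !Gc // !subnn /Fq !big_ord0 !mulr1 !divff //;
    apply: lt0r_neq0; exact: Fq_gt0.
Qed.

Lemma Vand (R : realType) (q m : nat) : (1 < q)%N -> forall n k,
  gauss_binom R q (m + n) k = \sum_(i < k.+1)
    gauss_binom R q m i * gauss_binom R q n (k - i) * (q%:R : R) ^+ ((k - i) * (m - i)).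
Proof.
move=> hq; elim: m => [|m IH] n k.
  rewrite add0n big_ord_recl /= G0 subn0 mul1r muln0 expr0 mulr1 big1 ?addr0 //.
  by move=> i _; rewrite Gz // !mul0r.
case: k => [|k].
  by rewrite big_ord_recl big_ord0 /= !G0 addr0 mul0n expr0 !mulr1.
rewrite addSn GP // (IH n k) (IH n k.+1).
rewrite [RHS]big_ord_recl; symmetry.
under eq_bigr => i _ do rewrite lift0 !subSS GP // mulrDl mulrDl.
rewrite big_split /= addrCA; congr (_ + _).
rewrite [X in _ = _ * X]big_ord_recl /= mulrDr; congr (_ + _).
  rewrite !G0 !subn0 !mul1r mulrCA -exprD; congr (_ * _ ^+ _); lia.
rewrite big_distrr /=; apply: eq_bigr => i _.
rewrite (_ : bump 0 i = i.+1) //.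
case: (ltnP m i.+1) => hm.
  by rewrite Gz // !(mulr0, mul0r).
have hi := ltn_ord i.
have eE : (i.+1 + (k - i) * (m - i) = k.+1 + (k - i) * (m - i.+1))%N by nia.
set G1 := gauss_binom R q m i.+1; set G2 := gauss_binom R q n (k - i).
transitivity (G1 * G2 * (q%:R : R) ^+ (i.+1 + (k - i) * (m - i))).
  by rewrite exprD; ring.
by rewrite eE exprD; ring.
Qed.

Lemma Gge (R : realType) (q m k : nat) : (1 < q)%N -> (k <= m)%N ->
  (q%:R : R) ^+ (k * (m - k)) <= gauss_binom R q m k.
Proof.
move=> hq hk; rewrite mulnC exprM.
have -> : ((q%:R : R) ^+ (m - k)) ^+ k = \prod_(i < k) (q%:R : R) ^+ (m - k).
  by rewrite prodr_const card_ord.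
rewrite /gauss_binom.
apply: ler_prod => i _; apply/andP; split; first exact: ltW (Qe_gt0 _ _ _ hq).
have hi := ltn_ord i.
have hden : 0 < (q%:R : R) ^+ k - (q%:R) ^+ i.
  rewrite (@Qsplit R q k i (ltnW hi)) mulr_gt0 ?Qe_gt0 // subr_gt0.
  have -> : (k - i = (k - i).-1.+1)%N by lia.
  exact: Qe_gt1.
rewrite ler_pdivlMr // mulrBr -!exprD subnK // lerD2l lerN2.
rewrite ler_eXn2l ?Qgt1 //; lia.
Qed.

Lemma Gle (R : realType) (q m k : nat) : (1 < q)%N -> (k <= m)%N ->
  gauss_binom R q m k <= (q%:R : R) ^+ (k * (m - k)) / Pq R q k.
Proof.
move=> hq hk; rewrite Gc // !Fq_P //.
have e : eqq m = (eqq k + eqq (m - k) + k * (m - k))%N.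
  by rewrite -eqq_add subnKC.
rewrite e !exprD.
have hPk := @Pq_gt0 R q k hq; have hPm := @Pq_gt0 R q (m - k) hq.
have hP := @Pq_gt0 R q m hq.
have hle : Pq R q m <= Pq R q (m - k).
  by have := @Pq_le R q (m - k) k hq; rewrite subnK.
have ha := @Qe_gt0 R q (eqq k) hq; have hb := @Qe_gt0 R q (eqq (m - k)) hq.
have hc := @Qe_gt0 R q (k * (m - k)) hq.
set a := (q%:R : R) ^+ eqq k in ha *; set b := (q%:R : R) ^+ eqq (m - k) in hb *.
set c := (q%:R : R) ^+ (k * (m - k)) in hc *.
have -> : a * b * c * Pq R q m / (a * Pq R q k * (b * Pq R q (m - k)))
   = c / Pq R q k * (Pq R q m / Pq R q (m - k)).
  by field; rewrite !lt0r_neq0.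
apply: ler_piMr; first by rewrite divr_ge0 ?ltW.
by rewrite ler_pdivrMr // mul1r.
Qed.

Lemma GI (R : realType) (q r t d : nat) : (1 < q)%N -> (d <= t)%N -> (t <= r)%N ->
  gauss_binom R q r d * gauss_binom R q (r - d) (t - d) =
  gauss_binom R q r t * gauss_binom R q t (t - d).
Proof.
move=> hq hd ht; rewrite !Gc //; try lia.
have -> : (r - d - (t - d) = r - t)%N by lia.
have -> : (t - (t - d) = d)%N by lia.
have := @Fq_gt0 R q r hq; have := @Fq_gt0 R q t hq; have := @Fq_gt0 R q d hq;
have := @Fq_gt0 R q (r - d) hq; have := @Fq_gt0 R q (t - d) hq;
have := @Fq_gt0 R q (r - t) hq.
move=> h1 h2 h3 h4 h5 h6.
field; rewrite !lt0r_neq0 //.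
Qed.

Lemma G_ge1 (R : realType) (q m k : nat) : (1 < q)%N -> (k <= m)%N ->
  1 <= gauss_binom R q m k.
Proof.
move=> hq hk; apply: le_trans (@Gge R q m k hq hk).
by rewrite exprn_ege1 // ltW // Qgt1.
Qed.

Lemma Pq_lb1 (R : realType) (q m : nat) : (1 < q)%N ->
  1 / 6 + ((q%:R : R) ^+ m.+1)^-1 / 3 <= Pq R q m.+1.
Proof.
move=> hq.
have hq2 : (2 : R) <= q%:R by rewrite (ler_nat R 2 q).
have hx0 : 0 < (q%:R : R)^-1 by rewrite invr_gt0; apply: lt_le_trans hq2; lra.
have hx : (q%:R : R)^-1 <= 1 / 2.
  rewrite -(@invr1 R) -invfM mul1r lef_pV2 ?posrE //; try lra.
elim: m => [|m IH].
  by rewrite PqS /Pq big_ord0 mul1r expr1; lra.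
rewrite PqS exprS invfM.
set x := (q%:R : R)^-1 in hx0 hx *.
set y := ((q%:R : R) ^+ m.+1)^-1 in IH *.
have hy0 : 0 <= y by rewrite /y invr_ge0 ltW // Qe_gt0.
have hyx : y <= x.
  rewrite /y /x lef_pV2 ?posrE ?Qe_gt0 //; last by apply: lt_le_trans hq2; lra.
  by rewrite -{1}(expr1 (q%:R : R)) ler_eXn2l ?Qgt1.
have h1 : 0 <= 1 - x * y by nra.
have := ler_wpM2r h1 IH.
nra.
Qed.

Lemma Pq_lb (R : realType) (q m : nat) : (1 < q)%N -> 1 / 6 <= Pq R q m.
Proof.
move=> hq; case: m => [|m]; first by rewrite /Pq big_ord0; lra.
apply: le_trans (@Pq_lb1 R q m hq).
have : 0 <= ((q%:R : R) ^+ m.+1)^-1 by rewrite invr_ge0 ltW // Qe_gt0.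
lra.
Qed.

Lemma Kq_seq (R : realType) (q : nat) :
  (fun m : nat => \prod_(1 <= j < m.+1) (1 - ((q%:R : R) ^+ j)^-1)) = Pq R q.
Proof.
by apply: funext => m; rewrite big_add1 /= big_mkord.
Qed.

Lemma Kq_bounds (R : realType) (q t : nat) : (1 < q)%N ->
  0 < Kq R q /\ Kq R q < Pq R q t.
Proof.
move=> hq; rewrite /Kq Kq_seq.
have hom : {homo Pq R q : n m / (n <= m)%N >-> m <= n}.
  by move=> n m hnm; rewrite -(subnKC hnm); apply: Pq_le.
have hlb : has_lbound (range (Pq R q)).
  by exists (1/6) => _ [m _ <-]; exact: Pq_lb.
have hc := nonincreasing_is_cvgn hom hlb.
split.
  apply: lt_le_trans (_ : 1/6 <= _); first lra.
  apply: limr_ge => //.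
  by apply: nearW => n; exact: (@Pq_lb R q n hq).
apply: (le_lt_trans (nonincreasing_cvgn_ge hom hc t.+1)).
rewrite PqS -[X in _ < X]mulr1 ltr_pM2l ?Pq_gt0 //.
rewrite ltrBlDr ltrDl invr_gt0 Qe_gt0 //.
Qed.

Lemma G_ge0 (R : realType) (q m k : nat) : (1 < q)%N -> (k <= m)%N ->
  0 <= gauss_binom R q m k.
Proof. by move=> hq hk; apply: le_trans (@G_ge1 R q m k hq hk). Qed.

Lemma main_q (R : realType) (q n r t : nat) :
  (1 < q)%N -> (r <= n./2)%N -> (t <= r)%N ->
  (q%:R : R) ^+ (t * (n - t)) <= V_C R q n r t /\
  V_C R q n r t < (Kq R q) ^-2 * (q%:R : R) ^+ (t * (n - t)).
Proof.
move=> hq hr ht.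
rewrite geq_half_double -addnn in hr.
set s := (n - r)%N.
have hs : (r <= s)%N by rewrite /s; lia.
have hts : (t <= s)%N by lia.
have hNC : forall d : 'I_t.+1, 0 <= N_C R q n r d.
  move=> d; have hd := ltn_ord d.
  have g1 : 0 <= gauss_binom R q r d by apply: G_ge0 => //; lia.
  have g2 : 0 <= gauss_binom R q (n - r) d by apply: G_ge0 => //; lia.
  have g3 := @Qe_gt0 R q (d * d) hq.
  by rewrite /N_C !mulr_ge0 // ltW.
rewrite /V_C big_mkord; split.
  rewrite (bigD1 ord_max) //=.
  apply: (@le_trans _ _ (N_C R q n r t)); last first.
    by rewrite lerDl; apply: sumr_ge0 => d _; exact: hNC.
  rewrite /N_C -/s.
  have e : (t * (n - t) = t * t + t * (r - t) + t * (s - t))%N by rewrite /s; nia.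
  rewrite e !exprD.
  have h1 := @Gge R q r t hq ht; have h2 := @Gge R q s t hq hts.
  have q1 := @Qe_gt0 R q (t * t) hq; have q2 := @Qe_gt0 R q (t * (r - t)) hq.
  have q3 := @Qe_gt0 R q (t * (s - t)) hq.
  apply: ler_pM; [exact: mulr_ge0 (ltW q1) (ltW q2) | exact: ltW q3 | | exact: h2].
  apply: ler_pM; [exact: ltW q1 | exact: ltW q2 | exact: lexx | exact: h1].
have step1 : \sum_(d < t.+1) N_C R q n r d <=
    gauss_binom R q r t * \sum_(d < t.+1)
      ((q%:R : R) ^+ (d * d) * gauss_binom R q t (t - d) * gauss_binom R q s d).
  rewrite big_distrr /=; apply: ler_sum => d _; have hd := ltn_ord d.
  rewrite /N_C -/s.
  have g1 := @G_ge1 R q (r - d) (t - d) hq (leq_sub2r d ht).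
  have g0 : 0 <= gauss_binom R q r d by apply: G_ge0 => //; lia.
  have hle : gauss_binom R q r d <= gauss_binom R q r t * gauss_binom R q t (t - d).
    rewrite -GI //; try lia.
    by rewrite -{1}[gauss_binom R q r d]mulr1 ler_wpM2l.
  have g2 : 0 <= gauss_binom R q s d by apply: G_ge0 => //; lia.
  have hQ := @Qe_gt0 R q (d * d) hq.
  have : (q%:R : R) ^+ (d * d) * gauss_binom R q r d * gauss_binom R q s d <=
     (q%:R : R) ^+ (d * d) * (gauss_binom R q r t * gauss_binom R q t (t - d)) *
       gauss_binom R q s d.
    by rewrite ler_wpM2r // ler_wpM2l // ltW.
  move=> H; apply: le_trans H _; rewrite le_eqVlt; apply/orP; left; apply/eqP; ring.
have step2 : \sum_(d < t.+1)
      ((q%:R : R) ^+ (d * d) * gauss_binom R q t (t - d) * gauss_binom R q s d)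
    = gauss_binom R q (t + s) t.
  rewrite (@Vand R q t hq s t) (reindex_inj rev_ord_inj) /=.
  apply: eq_bigr => i _; rewrite subSS.
  have hi := ltn_ord i.
  rewrite subKn; last by lia.
  ring.
rewrite step2 in step1.
have hG1 := @Gle R q r t hq ht.
have hG2 := @Gle R q (t + s) t hq (leq_addr _ _).
rewrite addKn in hG2.
have [hK0 hKP] := @Kq_bounds R q t hq.
have hP := @Pq_gt0 R q t hq.
have hG1' : 0 <= gauss_binom R q r t by apply: G_ge0.
have hG2' : 0 <= gauss_binom R q (t + s) t by apply: G_ge0 => //; lia.
have e2 : (t * (n - t) = t * (r - t) + t * s)%N by rewrite /s; nia.
rewrite e2 exprD.
have ha := @Qe_gt0 R q (t * (r - t)) hq; have hb := @Qe_gt0 R q (t * s) hq.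
set a := (q%:R : R) ^+ (t * (r - t)) in ha hG1 *.
set b := (q%:R : R) ^+ (t * s) in hb hG2 *.
apply: le_lt_trans step1 _.
apply: (le_lt_trans (ler_pM hG1' hG2' hG1 hG2)).
have -> : a / Pq R q t * (b / Pq R q t) = (a * b) / (Pq R q t ^+ 2).
  by field; rewrite lt0r_neq0.
rewrite [X in _ < X]mulrC ltr_pM2l ?mulr_gt0 //.
rewrite ltf_pV2 ?posrE ?exprn_gt0 //.
rewrite !expr2; apply: ltr_pM => //; exact: ltW.
Qed.

Theorem lemma3 (R : realType) (q n r t : nat) :
  prime_power q -> (r <= n./2)%N -> (t <= r)%N ->
  (q%:R : R) ^+ (t * (n - t)) <= V_C R q n r t /\
  V_C R q n r t < (Kq R q) ^-2 * (q%:R : R) ^+ (t * (n - t)).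
Proof.
move=> [p [k [pp [k0 ->]]]] hr ht.
apply: main_q => //.
rewrite -(exp1n k) ltn_exp2r //; exact: prime_gt1.
Qed.
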